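(* Satisfaction approval voting (SAV) is the only BSWAV rule (for the fixed $m$ and $k$) that satisfies party-proportionality and aversion to unanimous committees.
   Context: Let $\mathcal C=\{c_1,\dots,c_m\}$ ($m\ge2$) be the candidates, $\mathcal A$ the set of non-empty subsets of $\mathcal C$ (ballots), and a profile a map $A:N_A\to\mathcal A$ from a non-empty finite set of voters $N_A\subseteq\mathbb N$. Fix $k\in\{1,\dots,m-1\}$, and let $\mathcal W_k$ be the set of $k$-element subsets of $\mathcal C$ (committees). An ABC voting rule maps each profile to a non-empty subset of $\mathcal W_k$. A BSWAV rule is defined by a weight vector $\alpha\in\mathbb R^m_{\ge0}$ and chooses for each profile $A$ the committees $W$ maximizing $\sum_{i\in N_A}\alpha_{|A_i|}|A_i\cap W|$. SAV is the BSWAV rule with $\alpha_x=1/x$ for $x\in\{1,\dots,m\}$. A profile $A$ is a party-list profile if there is a partition $\mathcal P_A=\{P_1,\dots,P_\ell\}$ of $\mathcal C$ such that every voter's ballot equals some $P_j$; $n_j$ denotes the number of voters whose ballot is $P_j$. An ABC voting rule $f$ is party-proportional if for all party-list profiles $A$, all $W\in f(A)$, and all parties $P_i,P_j\in\mathcal P_A$ with $n_i/|P_i|<n_j/|P_j|$, $P_i\subseteq W$ implies $P_j\subseteq W$. $f$ satisfies aversion to unanimous committees if for all party-list profiles $A$ and parties $P_i\in\mathcal P_A$: if $W\subseteq P_i$ for all $W\in f(A)$, then $n_i/|P_i|>n_j$ for every other party $P_j\in\mathcal P_A$ with $|P_j|=1$. *)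

(* Defs.v *)
From mathcomp Require Import all_boot all_order all_algebra.
From mathcomp Require Import reals.
Set Implicit Arguments. Unset Strict Implicit. Unset Printing Implicit Defensive.
Import Order.TTheory GRing.Theory Num.Theory.
Local Open Scope ring_scope.

Record profile (m : nat) := Profile {
  voters : seq nat;
  ballot : nat -> {set 'I_m};
  voters_uniq : uniq voters;
  voters_nonempty : voters != [::];
  ballots_nonempty : forall i, i \in voters -> ballot i != set0
}.

Definition committee (m k : nat) (W : {set 'I_m}) : bool := #|W| == k.

Definition ABC_rule (m : nat) := profile m -> {set {set 'I_m}}.

Definition is_ABC_rule (m k : nat) (f : ABC_rule m) : Prop :=
  forall A : profile m, f A != set0 /\ forall W, W \in f A -> committee k W.

Definition bswav_score (R : realType) (m : nat) (alpha : nat -> R)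
    (A : profile m) (W : {set 'I_m}) : R :=
  \sum_(i <- voters A) alpha #|ballot A i| * (#|ballot A i :&: W|)%:R.

Definition BSWAV (R : realType) (m k : nat) (alpha : nat -> R) : ABC_rule m :=
  fun A => [set W : {set 'I_m} | committee k W &&
     [forall W' : {set 'I_m}, committee k W' ==>
        (bswav_score alpha A W' <= bswav_score alpha A W)]].

Definition sav_weight (R : realType) (x : nat) : R := (x%:R)^-1.

Definition SAV (R : realType) (m k : nat) : ABC_rule m :=
  BSWAV k (@sav_weight R).

Definition party_list_wrt (m : nat) (A : profile m) (P : {set {set 'I_m}}) : Prop :=
  partition P [set: 'I_m] /\ forall i, i \in voters A -> ballot A i \in P.

Definition is_party_list (m : nat) (A : profile m) : Prop :=
  exists P, party_list_wrt A P.

Definition nvotes (m : nat) (A : profile m) (Pj : {set 'I_m}) : nat :=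
  count (fun i => ballot A i == Pj) (voters A).

Definition party_proportional (R : realType) (m : nat) (f : ABC_rule m) : Prop :=
  forall (A : profile m) (P : {set {set 'I_m}}), party_list_wrt A P ->
  forall W, W \in f A ->
  forall Pi Pj, Pi \in P -> Pj \in P ->
    (nvotes A Pi)%:R / (#|Pi|)%:R < (nvotes A Pj)%:R / (#|Pj|)%:R :> R ->
    Pi \subset W -> Pj \subset W.

Definition aversion_unanimous (R : realType) (m : nat) (f : ABC_rule m) : Prop :=
  forall (A : profile m) (P : {set {set 'I_m}}), party_list_wrt A P ->
  forall Pi, Pi \in P ->
    (forall W, W \in f A -> W \subset Pi) ->
    forall Pj, Pj \in P -> Pj != Pi -> #|Pj| = 1%N ->
      (nvotes A Pj)%:R < (nvotes A Pi)%:R / (#|Pi|)%:R :> R.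

(* Main.v *)
Require Import Defs.
From mathcomp Require Import all_boot all_order all_algebra.
From mathcomp Require Import reals.
From mathcomp Require Import zify ring lra.
Set Implicit Arguments. Unset Strict Implicit. Unset Printing Implicit Defensive.
Import Order.TTheory GRing.Theory Num.Theory.
Local Open Scope ring_scope.

Section Gen.
Variable R : realType.
Variable m : nat.
Implicit Types (alpha : nat -> R) (A : profile m) (W : {set 'I_m}).

Definition wgt alpha A (j : 'I_m) : R :=
  \sum_(v <- voters A) alpha #|ballot A v| * (j \in ballot A v)%:R.

Lemma score_wgt alpha A W : bswav_score alpha A W = \sum_(j in W) wgt alpha A j.
Proof.
rewrite /bswav_score /wgt (exchange_big _ _ (voters A)) /=.
apply: eq_bigr => v _; rewrite -mulr_sumr; congr (_ * _).
rewrite -sum1_card natr_sum big_mkcond /= [RHS]big_mkcond /=.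
apply: eq_bigr => j _; rewrite inE.
by case: (j \in ballot A v); case: (j \in W).
Qed.

Lemma card_interval (s x : nat) : (s + x <= m)%N ->
  #|[set j : 'I_m | (s <= j < s + x)%N]| = x.
Proof.
elim: x => [|x IH] hx.
  rewrite (_ : [set j : 'I_m | _] = set0) ?cards0 //; apply/setP => j; rewrite !inE.
  by rewrite addn0; case: leqP.
have hlt : (s + x < m)%N by rewrite addnS in hx.
have -> : [set j : 'I_m | (s <= j < s + x.+1)%N] =
   (Ordinal hlt) |: [set j : 'I_m | (s <= j < s + x)%N].
  apply/setP => j; rewrite !inE; apply/idP/idP.
    move=> /andP[h1 h2]; apply/orP.
    case: (ltnP j (s + x)) => h3; first by right; rewrite h1.
    by left; apply/eqP/val_inj => /=; lia.
  case/orP => [/eqP -> /=|]; first lia.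
  move=> /andP[h1 h2]; rewrite h1 /=; lia.
rewrite cardsU1 IH; last lia.
by rewrite inE /= ltnn andbF.
Qed.

Lemma score_swap alpha A W d p : d \in W -> p \notin W ->
  bswav_score alpha A (p |: (W :\ d)) =
  bswav_score alpha A W - wgt alpha A d + wgt alpha A p.
Proof.
move=> hd hp; rewrite !score_wgt big_setU1 /=; last by rewrite !inE negb_and hp orbT.
rewrite [in RHS](big_setD1 d hd) /=; ring.
Qed.

Lemma card_swap W d p : d \in W -> p \notin W -> #|p |: (W :\ d)| = #|W|.
Proof.
move=> hd hp; rewrite cardsU1 !inE negb_and hp orbT (cardsD1 d W) hd.
by rewrite add1n.
Qed.

Lemma winner_swap k alpha A W d p : W \in BSWAV k alpha A -> d \in W -> p \notin W ->
  wgt alpha A p <= wgt alpha A d.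
Proof.
rewrite inE => /andP[hc /forallP hW] hd hp.
have := implyP (hW (p |: (W :\ d))).
move: (hc); rewrite /committee => hc'.
rewrite /committee card_swap // hc' score_swap // => /(_ isT).
move=> h; lra.
Qed.

Lemma threshold (w : 'I_m -> R) (t : R) W W' :
  #|W'| = #|W| -> (forall j, j \in W -> t <= w j) -> (forall j, j \notin W -> w j <= t) ->
  \sum_(j in W') w j <= \sum_(j in W) w j.
Proof.
move=> hcard hin hout.
rewrite (big_setID (A := W') W) [X in _ <= X](big_setID (A := W) W') /= setIC.
rewrite lerD2l.
apply: (@le_trans _ _ (\sum_(j in W' :\: W) t)).
  by apply: ler_sum => j; rewrite inE => /andP[/hout].
apply: (@le_trans _ _ (\sum_(j in W :\: W') t)); last first.
  by apply: ler_sum => j; rewrite inE => /andP[_ /hin].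
rewrite !sumr_const; rewrite le_eqVlt; apply/orP; left; apply/eqP; congr (_ *+ _).
have h1 := cardsID W W'. have h2 := cardsID W' W.
rewrite setIC in h2. lia.
Qed.


Lemma part_facts A P : party_list_wrt A P ->
  [/\ cover P = setT, trivIset P, set0 \notin P &
      forall i, i \in voters A -> ballot A i \in P].
Proof.
by case=> /and3P[/eqP h1 h2 h3] h4; split.
Qed.

Lemma wgt_party alpha A P : party_list_wrt A P -> forall j,
  wgt alpha A j = alpha #|pblock P j| * (nvotes A (pblock P j))%:R.
Proof.
move=> /part_facts[hc ht h0 hb] j.
rewrite /wgt /nvotes -sum1_count natr_sum mulr_sumr [RHS]big_mkcond /=.
rewrite big_seq [RHS]big_seq; apply: eq_bigr => v hv.
have hbv := hb v hv.
case: (boolP (j \in ballot A v)) => hj.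
  by rewrite (def_pblock ht hbv hj) eqxx mulr1.
case: (eqVneq (ballot A v) (pblock P j)) => [e|_]; last by rewrite mulr0.
by exfalso; move: hj; rewrite e mem_pblock hc inE.
Qed.

Lemma card_init (k : nat) : (k <= m)%N -> #|[set j : 'I_m | (j < k)%N]| = k.
Proof.
move=> hk; rewrite -{2}(card_interval (s := 0) (x := k)) //.
Qed.

Lemma bswav_exists k alpha A : (k <= m)%N -> exists W, W \in BSWAV k alpha A.
Proof.
move=> hk.
have h0 : committee k [set j : 'I_m | (j < k)%N] by rewrite /committee card_init.
case: (@arg_maxP _ R _ _ (fun W => committee k W) (bswav_score alpha A) h0) => W hW hmax.
exists W; rewrite inE hW /=; apply/forallP => W'; apply/implyP => hW'.
exact: hmax.
Qed.


Lemma pblock_eq A P (B : {set 'I_m}) (c : 'I_m) : party_list_wrt A P ->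
  B \in P -> c \in B -> pblock P c = B.
Proof. by move=> /part_facts[_ ht _ _]; apply: def_pblock. Qed.

Lemma sav_wgt A P (B : {set 'I_m}) c : party_list_wrt A P -> B \in P -> c \in B ->
  wgt (@sav_weight R) A c = (nvotes A B)%:R / (#|B|)%:R.
Proof.
move=> hP hB hc; rewrite (wgt_party _ hP) (pblock_eq hP hB hc) /sav_weight.
by rewrite mulrC.
Qed.

Lemma sav_pp k : party_proportional R (SAV R (m := m) k).
Proof.
move=> A P hP W hW Pi Pj hi hj hlt hsub.
have [_ _ h0 _] := part_facts hP.
apply/subsetP => p hp; apply/negPn/negP => hpW.
have : Pi != set0 by apply: contraNneq h0 => <-.
case/set0Pn => d hd.
have := winner_swap hW (subsetP hsub d hd) hpW.
rewrite (sav_wgt hP hj hp) (sav_wgt hP hi hd) => hle.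
by move: (lt_le_trans hlt hle); rewrite ltxx.
Qed.

Lemma sav_av k : (1 <= k <= m)%N -> aversion_unanimous R (SAV R (m := m) k).
Proof.
move=> /andP[hk1 hkm] A P hP Pi hi hall Pj hj hne hcard1.
have [_ ht _ _] := part_facts hP.
have [c ec] : exists c, Pj = [set c] by apply/cards1P/eqP.
have hcj : c \in Pj by rewrite ec set11.
have hnotPi : c \notin Pi.
  apply/negP => hci; move/eqP: hne; apply.
  by rewrite -(pblock_eq hP hj hcj) (pblock_eq hP hi hci).
rewrite ltNge; apply/negP => hle.
have [W hW] := bswav_exists (@sav_weight R) A hkm.
have hWPi := hall W hW.
have hcW : c \notin W by apply: contra hnotPi; apply: (subsetP hWPi).
move: (hW); rewrite inE => /andP[/eqP hcW' /forallP hmax].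
have : W != set0 by apply/negP => /eqP e; move: hcW'; rewrite e cards0; lia.
case/set0Pn => d hd.
have hW2 : c |: (W :\ d) \in SAV R k A.
  rewrite inE /committee card_swap // hcW' eqxx /=.
  apply/forallP => W''; apply/implyP => h''.
  apply: (le_trans (implyP (hmax W'') h'')).
  rewrite score_swap // (sav_wgt hP hj hcj) (sav_wgt hP hi (subsetP hWPi d hd)).
  rewrite hcard1 divr1; lra.
rewrite -(pblock_eq hP hi (subsetP (hall _ hW2) c (setU11 _ _))) in hnotPi.
have [hcov _ _ _] := part_facts hP.
by rewrite mem_pblock hcov inE in hnotPi.
Qed.

End Gen.
Section Constr.
Variable m s x : nat.
Hypothesis hsx : (s + x <= m)%N.
Hypothesis hx : (0 < x)%N.
Variable cnt : 'I_m -> nat.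
Variable i0 : 'I_m.
Hypothesis hi0 : (0 < cnt i0)%N.

Definition Pset : {set 'I_m} := [set j : 'I_m | (s <= j < s + x)%N].
Definition party (j : 'I_m) : {set 'I_m} := if j \in Pset then Pset else [set j].
Definition bs : seq {set 'I_m} := flatten [seq nseq (cnt i) (party i) | i <- enum 'I_m].

Lemma party_self j : j \in party j.
Proof. by rewrite /party; case: ifP => // _; rewrite set11. Qed.

Lemma mem_party i j : (j \in party i) = (party i == party j).
Proof.
rewrite /party; case: (boolP (i \in Pset)) => hi; case: (boolP (j \in Pset)) => hj.
- by rewrite eqxx.
- case: (eqVneq Pset [set j]) => // e; exfalso.
  by move: hj; rewrite e set11.
- rewrite inE; case: (eqVneq j i) => [eji|_]; first by move: hi; rewrite -eji hj.
  case: (eqVneq [set i] Pset) => // e; by move: hi; rewrite -e set11.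
- rewrite inE; apply/eqP/eqP => [->//|e].
  by move: (set11 j); rewrite -e inE => /eqP.
Qed.

Lemma mem_bs B : B \in bs -> exists i, B = party i.
Proof.
case/flattenP => t /mapP[i _ ->]; rewrite mem_nseq => /andP[_ /eqP ->].
by exists i.
Qed.

Lemma bs_ne : bs != [::].
Proof.
have : party i0 \in bs.
  apply/flattenP; exists (nseq (cnt i0) (party i0)); last by rewrite mem_nseq hi0 eqxx.
  by apply/mapP; exists i0; rewrite ?mem_enum.
by case: bs.
Qed.

Lemma vne : iota 0 (size bs) != [::].
Proof. by move: bs_ne; case: bs. Qed.

Lemma bne v : v \in iota 0 (size bs) -> nth set0 bs v != set0.
Proof.
rewrite mem_iota add0n => /andP[_ hv].
have [i ->] := mem_bs (mem_nth set0 hv).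
by apply/set0Pn; exists i; apply: party_self.
Qed.

Definition mkprof : profile m :=
  @Profile m (iota 0 (size bs)) (fun v => nth set0 bs v) (iota_uniq 0 _) vne bne.

Definition Pparts : {set {set 'I_m}} := [set party i | i : 'I_m].

Lemma mk_party_list : party_list_wrt mkprof Pparts.
Proof.
split.
  apply/and3P; split.
  - apply/eqP/setP => j; rewrite inE; apply/bigcupP; exists (party j).
      by apply/imsetP; exists j.
    exact: party_self.
  - apply/trivIsetP => B1 B2 /imsetP[i1 _ ->] /imsetP[i2 _ ->] hne.
    rewrite -setI_eq0; apply/eqP/setP => j; rewrite !inE.
    apply/negbTE/negP => /andP[]; rewrite !mem_party => /eqP e1 /eqP e2.
    by move/eqP: hne; apply; rewrite e1 e2.
  - apply/negP => /imsetP[i _ e]; move: (party_self i); by rewrite -e inE.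
move=> v /= hv; rewrite mem_iota add0n in hv; move/andP: hv => [_ hv].
have [i ->] := mem_bs (mem_nth set0 hv).
by apply/imsetP; exists i.
Qed.

Lemma mk_pblock j : pblock Pparts j = party j.
Proof.
have [/and3P[_ ht _] _] := mk_party_list.
apply: def_pblock => //; last exact: party_self.
by apply/imsetP; exists j.
Qed.

Lemma mk_nvotes S : nvotes mkprof S = (\sum_(i | party i == S) cnt i)%N.
Proof.
rewrite /nvotes /= -(count_map (nth set0 bs) (pred1 S)).
have -> : [seq nth set0 bs i | i <- iota 0 (size bs)] = bs by exact: mkseq_nth.
rewrite count_flatten sumnE big_map big_map big_enum /= [RHS]big_mkcond /=.
apply: eq_bigr => i _; rewrite count_nseq /=.
by case: (party i == S); rewrite ?mul1n ?mul0n.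
Qed.

Lemma Pset_in : Pset \in Pparts.
Proof.
have hs : (s < m)%N by lia.
apply/imsetP; exists (Ordinal hs) => //.
by rewrite /party inE /=; rewrite leqnn /=; have -> : (s < s + x)%N by lia.
Qed.

Lemma single_in j : j \notin Pset -> [set j] \in Pparts.
Proof. move=> hj; apply/imsetP; exists j => //; rewrite /party. by case: ifP => // h; rewrite h in hj. Qed.

Lemma nv_Pset : nvotes mkprof Pset = (\sum_(i in Pset) cnt i)%N.
Proof.
rewrite mk_nvotes; apply: eq_bigl => i; rewrite /party.
case: (boolP (i \in Pset)) => hi; first by rewrite eqxx.
apply/negbTE/negP => /eqP e; move: (set11 i); by rewrite e (negbTE hi).
Qed.

Lemma nv_single j : j \notin Pset -> nvotes mkprof [set j] = cnt j.
Proof.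
move=> hj.
have hpj : party j = [set j] by rewrite /party; case: ifP => // h; rewrite h in hj.
rewrite mk_nvotes (big_pred1 j) // => i; rewrite /= -hpj -mem_party /party.
case: ifP => hi; last by rewrite inE eq_sym.
rewrite (negbTE hj); case: (eqVneq i j) => [e|//]; by rewrite -e hi in hj.
Qed.

Lemma card_Pset : #|Pset| = x.
Proof. exact: card_interval. Qed.

Lemma mk_wgt (R : realType) (alpha : nat -> R) j : wgt alpha mkprof j =
  if j \in Pset then alpha x * (\sum_(i in Pset) cnt i)%:R else alpha 1 * (cnt j)%:R.
Proof.
rewrite (wgt_party _ mk_party_list) mk_pblock /party.
case: ifP => hj; first by rewrite card_Pset nv_Pset.
by rewrite cards1 nv_single // hj.
Qed.

End Constr.

Lemma win_thr (R : realType) m k (alpha : nat -> R) (A : profile m) (W0 : {set 'I_m}) t :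
  #|W0| = k -> (forall j, j \in W0 -> t <= wgt alpha A j) ->
  (forall j, j \notin W0 -> wgt alpha A j <= t) -> W0 \in BSWAV k alpha A.
Proof.
move=> hc hin hout; rewrite inE /committee hc eqxx /=.
apply/forallP => W; apply/implyP => /eqP hW.
rewrite !score_wgt; apply: (threshold (t := t)) => //; by rewrite hW.
Qed.

Ltac nlia := repeat match goal with H : _ |- _ => clear H end; lia.

Section Main.
Variable R : realType.
Variable m k : nat.
Hypothesis hm : (2 <= m)%N.
Hypothesis hk : (1 <= k <= m.-1)%N.
Variable alpha : nat -> R.
Hypothesis halpha : forall x : nat, (1 <= x <= m)%N -> 0 <= alpha x.
Hypothesis hPP : party_proportional R (BSWAV (m := m) k alpha).
Hypothesis hAV : aversion_unanimous R (BSWAV (m := m) k alpha).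

Lemma alpha1_pos : 0 < alpha 1.
Proof.
have ha : 0 <= alpha 1 by apply: halpha; lia.
rewrite lt_def ha andbT; apply/negP => /eqP a0.
have hlast : (m.-1 < m)%N by lia.
pose last := Ordinal hlast.
pose cnt := fun i : 'I_m => nat_of_bool (nat_of_ord i == m.-1).
have hi0 : (0 < cnt last)%N by rewrite /cnt /= eqxx.
have hsx : (0 + 1 <= m)%N by lia.
have hx : (0 < 1)%N by [].
pose A := mkprof 0 1 hi0.
have hw : forall j, wgt alpha A j = 0.
  by move=> j; rewrite mk_wgt //; case: ifP => _; rewrite a0 mul0r.
have hW0 : [set j : 'I_m | (j < k)%N] \in BSWAV k alpha A.
  apply: (win_thr (t := 0)); first by apply: card_init; lia.
    by move=> j _; rewrite hw.
  by move=> j _; rewrite hw.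
have hlastP : last \notin Pset m 0 1 by rewrite inE /=; lia.
have := hPP (mk_party_list 0 1 hi0) hW0 (Pset_in hsx hx hi0) (single_in hlastP).
rewrite nv_Pset nv_single // card_Pset // cards1.
rewrite big1; last first.
  move=> i; rewrite inE /cnt /= => hi.
  have -> : (nat_of_ord i == m.-1) = false by apply/eqP; move: hi; lia.
  by [].
rewrite /cnt /= eqxx => H.
have hr : (0%:R / 1%:R < (nat_of_bool true)%:R / 1%:R :> R).
  by rewrite /= !divr1 ltr01.
move: {H}(H hr).
have hsub : Pset m 0 1 \subset [set j : 'I_m | (j < k)%N].
  by apply/subsetP => j; rewrite !inE; lia.
move=> /(_ hsub)/subsetP/(_ last (set11 _)); rewrite inE /=; lia.
Qed.


Lemma sum_Pset s x (cnt : 'I_m -> nat) n : (s + x <= m)%N -> (0 < x)%N ->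
  (forall i, i \in Pset m s x -> cnt i = if nat_of_ord i == s then n else 0%N) ->
  (\sum_(i in Pset m s x) cnt i)%N = n.
Proof.
move=> hsx hx hc; have hs : (s < m)%N by lia.
have hsP : Ordinal hs \in Pset m s x by rewrite inE /=; lia.
rewrite (bigD1 (Ordinal hs)) //= big1 ?addn0; first by rewrite hc // eqxx.
move=> i /andP[hi hne]; rewrite hc //.
case: eqP => // e; move: hne; suff -> : i = Ordinal hs by rewrite eqxx.
by apply: val_inj.
Qed.

Lemma ratio_eq (N x : nat) : (0 < x)%N -> ((N * x)%N%:R / x%:R : R) = N%:R.
Proof. by move=> hx; rewrite natrM mulfK // pnatr_eq0 -lt0n. Qed.

Lemma case_gt x : (1 <= x <= m.-1)%N -> ~ (alpha 1 < x%:R * alpha x).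
Proof.
move=> hx1 hgt.
have ha := alpha1_pos.
have hb : 0 <= alpha x by apply: halpha; lia.
set a := alpha 1 in ha hgt *; set b := alpha x in hb hgt *.
have hxR : (0 : R) < x%:R by rewrite ltr0n; lia.
have hd : 0 < x%:R * b - a by lra.
pose N := Num.Def.archi_bound (a / (x%:R * b - a)).
have hN : a < N%:R * (x%:R * b - a).
  have := @archi_boundP R (a / (x%:R * b - a)) (divr_ge0 (ltW ha) (ltW hd)).
  by rewrite ltr_pdivrMr.
pose nP := (N * x)%N. pose nc := N.+1.
have hnP : nP%:R = N%:R * x%:R :> R by rewrite /nP natrM.
have hnc : nc%:R = N%:R + 1 :> R by rewrite /nc -addn1 natrD.
have hrel : nc%:R * a < nP%:R * b by rewrite hnc hnP; lra.
have hnPb : 0 <= nP%:R * b by apply: mulr_ge0.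
pose H := Num.Def.archi_bound (nP%:R * b / a).
have hH : nP%:R * b < H%:R * a.
  have := @archi_boundP R (nP%:R * b / a) (divr_ge0 hnPb (ltW ha)).
  by rewrite ltr_pdivrMr.
pose s := (k - x)%N. pose c := (s + x)%N.
have hc : (c < m)%N by move: hk hx1; rewrite /c /s; nlia.
pose cnt := fun i : 'I_m => if (nat_of_ord i < s)%N then H else
   if nat_of_ord i == s then nP else if nat_of_ord i == c then nc else 0%N.
have hcntc : cnt (Ordinal hc) = nc.
  rewrite /cnt /=; have -> : (c < s)%N = false by move: hx1; rewrite /c; nlia.
  have -> : (c == s) = false by rewrite /c; apply/eqP; move: hx1; nlia.
  by rewrite eqxx.
have hi0 : (0 < cnt (Ordinal hc))%N by rewrite hcntc.
have hsx : (s + x <= m)%N by move: hk hx1; rewrite /s; nlia.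
have hx : (0 < x)%N by move: hx1; nlia.
pose A := mkprof s x hi0.
have hsum : (\sum_(i in Pset m s x) cnt i)%N = nP.
  apply: sum_Pset => // i; rewrite inE /cnt => /andP[h1 h2].
  have -> : (nat_of_ord i < s)%N = false by move: h1; nlia.
  case: eqP => // _; by have -> : (nat_of_ord i == c) = false by apply/eqP; move: h2; rewrite /c; nlia.
have hwP : forall j, j \in Pset m s x -> wgt alpha A j = b * nP%:R.
  by move=> j hj; rewrite mk_wgt // hj hsum.
have hwO : forall j, j \notin Pset m s x -> wgt alpha A j = a * (cnt j)%:R.
  by move=> j hj; rewrite mk_wgt // (negbTE hj).
have hcP : Ordinal hc \notin Pset m s x by rewrite inE /= /c; nlia.
have hratP : (nvotes A (Pset m s x))%:R / (#|Pset m s x|)%:R = N%:R :> R.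
  by rewrite nv_Pset hsum card_Pset // ratio_eq.
have hratc : (nvotes A [set Ordinal hc])%:R / (#|[set Ordinal hc]|)%:R = nc%:R :> R.
  by rewrite nv_single // cards1 divr1 hcntc.
have hltN : N%:R < nc%:R :> R by rewrite ltr_nat.
case: (leqP x k) => hxk.
- have hsk : (s + x = k)%N by move: hxk; rewrite /s; nlia.
  pose W0 := [set j : 'I_m | (j < k)%N].
  have hW0 : W0 \in BSWAV k alpha A.
    apply: (win_thr (t := b * nP%:R)); first by apply: card_init; move: hk hm; nlia.
    + move=> j; rewrite inE => hj.
      case: (boolP (j \in Pset m s x)) => hjP; first by rewrite hwP.
      rewrite hwO // /cnt.
      have -> : (nat_of_ord j < s)%N by move: hjP hj hsk; rewrite inE; nlia.
      lra.
    + move=> j; rewrite inE -leqNgt => hj.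
      have hjP : j \notin Pset m s x by rewrite inE; move: hj hsk; nlia.
      rewrite hwO // /cnt.
      have -> : (nat_of_ord j < s)%N = false by move: hj hsk hx; nlia.
      have -> : (nat_of_ord j == s) = false by apply/eqP; move: hj hsk hx; nlia.
      case: (nat_of_ord j == c); first lra.
      by rewrite mulr0 mulrC.
  have := hPP (mk_party_list s x hi0) hW0 (Pset_in hsx hx hi0) (single_in hcP).
  rewrite hratP hratc.
  have hsub : Pset m s x \subset W0 by apply/subsetP => j; rewrite !inE; move: hsk; nlia.
  move=> /(_ hltN hsub)/subsetP/(_ _ (set11 _)); rewrite inE /= /c; move: hsk; nlia.
- have hall : forall W, W \in BSWAV k alpha A -> W \subset Pset m s x.
    move=> W hW; apply/subsetP => j hjW; apply/negPn/negP => hjP.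
    have : ~~ (Pset m s x \subset W).
      apply/negP => /subset_leq_card; rewrite card_Pset //.
      move: hW; rewrite inE => /andP[/eqP -> _]; move: hxk; nlia.
    case/subsetPn => p hpP hpW.
    have := winner_swap hW hjW hpW.
    rewrite hwP // hwO //.
    have hcj : (cnt j <= nc)%N.
      rewrite /cnt.
      have -> : (nat_of_ord j < s)%N = false by move: hxk; rewrite /s; nlia.
      have -> : (nat_of_ord j == s) = false.
        by apply/eqP; move: hjP hxk hx; rewrite inE /s; nlia.
      by case: (nat_of_ord j == c).
    have : a * (cnt j)%:R <= a * nc%:R.
      by apply: ler_wpM2l; [exact: ltW | rewrite ler_nat].
    move=> h1 h2; move: (le_trans h2 h1).
    by rewrite leNgt mulrC [b * _]mulrC hrel.
  have hne : [set Ordinal hc] != Pset m s x.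
    by apply/negP => /eqP e; move: hcP; rewrite -e set11.
  have := hAV (mk_party_list s x hi0) (Pset_in hsx hx hi0) hall (single_in hcP) hne (cards1 _).
  by rewrite hratP nv_single // hcntc ltr_nat /nc => /ltnW; rewrite ltnn.
Qed.


Lemma case_lt x : (1 <= x <= m.-1)%N -> ~ (x%:R * alpha x < alpha 1).
Proof.
move=> hx1 hlt.
have ha := alpha1_pos.
have hb : 0 <= alpha x by apply: halpha; move: hx1 hm; nlia.
set a := alpha 1 in ha hlt *; set b := alpha x in hb hlt *.
have hxR : (0 : R) < x%:R by rewrite ltr0n; move: hx1; nlia.
have hxb : 0 <= x%:R * b by apply: mulr_ge0 => //; exact: ltW.
have hd : 0 < a - x%:R * b by lra.
pose N := Num.Def.archi_bound (x%:R * b / (a - x%:R * b)).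
have hN : x%:R * b < N%:R * (a - x%:R * b).
  have := @archi_boundP R (x%:R * b / (a - x%:R * b)) (divr_ge0 hxb (ltW hd)).
  by rewrite ltr_pdivrMr.
have hN0 : (0 < N)%N.
  have : 0 < N%:R * (a - x%:R * b) by lra.
  by rewrite pmulr_lgt0 // ltr0n.
pose nc := N. pose nP := (N.+1 * x)%N.
have hnP : nP%:R = (N%:R + 1) * x%:R :> R by rewrite /nP natrM -addn1 natrD.
have hrel : nP%:R * b < nc%:R * a by rewrite hnP /nc; lra.
have hnPb : 0 <= nP%:R * b by apply: mulr_ge0.
pose h := (k - x)%N. pose s := h.+1.
have hc : (h < m)%N by move: hk hx1; rewrite /h; nlia.
have he : (h + x < m)%N by move: hk hx1; rewrite /h; nlia.
pose cnt := fun i : 'I_m => if (nat_of_ord i <= h)%N then nc else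
   if nat_of_ord i == s then nP else 0%N.
have hcntc : cnt (Ordinal hc) = nc by rewrite /cnt /= leqnn.
have hi0 : (0 < cnt (Ordinal hc))%N by rewrite hcntc.
have hsx : (s + x <= m)%N by move: hk hx1; rewrite /s /h; nlia.
have hx : (0 < x)%N by move: hx1; nlia.
pose A := mkprof s x hi0.
have hsum : (\sum_(i in Pset m s x) cnt i)%N = nP.
  apply: sum_Pset => // i; rewrite inE /cnt => /andP[h1 h2].
  by have -> : (nat_of_ord i <= h)%N = false by move: h1; rewrite /s; nlia.
have hwP : forall j, j \in Pset m s x -> wgt alpha A j = b * nP%:R.
  by move=> j hj; rewrite mk_wgt // hj hsum.
have hwO : forall j, j \notin Pset m s x -> wgt alpha A j = a * (cnt j)%:R.
  by move=> j hj; rewrite mk_wgt // (negbTE hj).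
have hcP : Ordinal hc \notin Pset m s x by rewrite inE /= /s; nlia.
have heP : Ordinal he \in Pset m s x by rewrite inE /= /s; move: hx; nlia.
have hratP : (nvotes A (Pset m s x))%:R / (#|Pset m s x|)%:R = N.+1%:R :> R.
  by rewrite nv_Pset hsum card_Pset // ratio_eq.
have hratc : (nvotes A [set Ordinal hc])%:R / (#|[set Ordinal hc]|)%:R = N%:R :> R.
  by rewrite nv_single // cards1 divr1 hcntc.
have hltN : N%:R < N.+1%:R :> R by rewrite ltr_nat.
pose W0 := [set j : 'I_m | (j < k)%N].
have hW0 : W0 \in BSWAV k alpha A.
  apply: (win_thr (t := b * nP%:R)); first by apply: card_init; move: hk hm; nlia.
  + move=> j; rewrite inE => hj.
    case: (boolP (j \in Pset m s x)) => hjP; first by rewrite hwP.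
    rewrite hwO // /cnt.
    have -> : (nat_of_ord j <= h)%N by move: hjP hj hk; rewrite inE /s /h; nlia.
    rewrite /nc; lra.
  + move=> j; rewrite inE -leqNgt => hj.
    case: (boolP (j \in Pset m s x)) => hjP; first by rewrite hwP.
    rewrite hwO // /cnt.
    have -> : (nat_of_ord j <= h)%N = false by move: hj hx hk; rewrite /h; nlia.
    have -> : (nat_of_ord j == s) = false.
      by apply/eqP; move: hjP hx; rewrite inE /s; nlia.
    by rewrite mulr0 mulrC.
have := hPP (mk_party_list s x hi0) hW0 (single_in hcP) (Pset_in hsx hx hi0).
rewrite hratP hratc.
have hsub : [set Ordinal hc] \subset W0.
  by apply/subsetP => j; rewrite !inE => /eqP ->; move: hx hk; rewrite /= /h; nlia.
move=> /(_ hltN hsub)/subsetP/(_ _ heP); rewrite inE /=; move: hx hk; rewrite /h; nlia.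
Qed.

End Main.

Lemma score_decomp (R : realType) m k (alpha : nat -> R) (a : R) (A : profile m) (W : {set 'I_m}) :
  (forall x, (1 <= x <= m.-1)%N -> x%:R * alpha x = a) -> #|W| = k ->
  bswav_score alpha A W = a * bswav_score (@sav_weight R) A W +
    \sum_(v <- voters A) (if #|ballot A v| == m then (alpha m - a / m%:R) * k%:R else 0).
Proof.
move=> hal hW; rewrite /bswav_score mulr_sumr -big_split /= big_seq [RHS]big_seq.
apply: eq_bigr => v hv.
have hne := ballots_nonempty hv.
have h1 : (0 < #|ballot A v|)%N by rewrite card_gt0.
have h2 : (#|ballot A v| <= m)%N by rewrite -[X in (_ <= X)%N](card_ord m) max_card.
case: eqP => hm'.
  have -> : ballot A v = setT.
    by apply/eqP; rewrite eqEcard subsetT cardsT card_ord hm' leqnn.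
  rewrite setIC setIT hW cardsT card_ord /sav_weight; field; rewrite pnatr_eq0; move: h1 h2; nlia.
have hx : (1 <= #|ballot A v| <= m.-1)%N.
  move: h1 h2 hm'; move: #|ballot A v| => n; nlia.
have := hal _ hx; set x := #|ballot A v| => hax.
have hx0 : x%:R != 0 :> R by rewrite pnatr_eq0 -lt0n.
have -> : alpha x = a / x%:R by rewrite -hax [_ * alpha x]mulrC mulfK.
rewrite /sav_weight; field => //.
Qed.

Lemma bswav_eq_sav (R : realType) m k (alpha : nat -> R) (a : R) (A : profile m) :
  0 < a -> (forall x, (1 <= x <= m.-1)%N -> x%:R * alpha x = a) ->
  BSWAV k alpha A = SAV R k A.
Proof.
move=> ha hal; apply/setP => W; rewrite !inE.
case hW: (committee k W) => //=.
apply: eq_forallb => W'; case hW': (committee k W') => //=.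
rewrite (@score_decomp R m k alpha a A W hal (eqP hW)) (@score_decomp R m k alpha a A W' hal (eqP hW')).
by rewrite lerD2r ler_pM2l.
Qed.

Unset Implicit Arguments.
Set Strict Implicit.

Theorem proposition3 (R : realType) (m k : nat)
    (hm : (2 <= m)%N) (hk : (1 <= k <= m.-1)%N)
    (alpha : nat -> R) (halpha : forall x : nat, (1 <= x <= m)%N -> 0 <= alpha x) :
  (party_proportional R (BSWAV (m := m) k alpha) /\
   aversion_unanimous R (BSWAV (m := m) k alpha))
  <-> (forall A : profile m, BSWAV k alpha A = SAV R k A).
Proof.
split.
  case=> hPP hAV A.
  apply: (@bswav_eq_sav R m k alpha (alpha 1) A); first exact: (alpha1_pos hm hk halpha hPP).
  move=> x hx.
  case: (ltgtP (x%:R * alpha x) (alpha 1)) => // h.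
    by case: (case_lt hm hk halpha hPP hx h).
  by case: (case_gt hm hk halpha hPP hAV hx h).
move=> heq; split.
  move=> A P hP W; rewrite heq; exact: (sav_pp hP).
move=> A P hP Pi hi; rewrite heq => hall.
apply: (sav_av _ hP hi hall); move: hk hm; nlia.
Qed.
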